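(* Let $R>r>0$ with $R/r>\sqrt{2}$. Then the standard torus $T_{R,r}$ is conformally equivalent to the Hopf torus $\pi^{-1}(p_t)\subset S^3$ (with the metric induced from $S^3$) associated to the circle $p_t$ in $S^2$ parametrized by $$s\mapsto (2t^2-1)+2t\sqrt{1-t^2}\,(\cos(s)\,j+\sin(s)\,k),$$ where $t=r/R$.
   Context: For $R>r>0$, the standard torus $T_{R,r}\subset\mathbb{R}^3$ is the image of $\Phi(\theta,\varphi)=\big((R+r\cos\varphi)\cos\theta,(R+r\cos\varphi)\sin\theta,r\sin\varphi\big)$, $(\theta,\varphi)\in\mathbb{R}^2$, equipped with the complex structure induced by the Euclidean metric of $\mathbb{R}^3$. $Q$ denotes the quaternions, $S^3\subset Q$ the unit quaternions with the round metric, and $S^2$ is identified with the unit sphere in the real span of $1,j,k$. For $q=a+bi+cj+dk$ set $\tilde q=a-bi+cj+dk$; the Hopf map is $\pi:S^3\to S^2$, $\pi(q)=\tilde q q$. The Hopf torus associated to a closed curve $p$ in $S^2$ is $\pi^{-1}(p)$ with the complex structure induced by the metric inherited from $S^3$. *)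

(* Defs.v *)
From HB Require Import structures.
From mathcomp Require Import all_boot all_order all_algebra.
From mathcomp Require Import all_classical all_reals all_analysis.
Set Implicit Arguments. Unset Strict Implicit. Unset Printing Implicit Defensive.
Import Order.TTheory GRing.Theory Num.Theory.
Import numFieldNormedType.Exports.
Local Open Scope classical_set_scope.
Local Open Scope ring_scope.

Section Defs.
Variable R : realType.

Definition dotv (n : nat) (u v : 'rV[R]_n) : R := \sum_(i < n) u ord0 i * v ord0 i.

Fixpoint iter_dir (m n : nat) (vs : seq 'rV[R]_m) (f : 'rV[R]_m -> 'rV[R]_n)
  : 'rV[R]_m -> 'rV[R]_n :=
  match vs with
  | [::] => f
  | v :: vs' => fun x => derive (iter_dir vs' f) x v
  end.

Definition smooth_on (m n : nat) (U : set 'rV[R]_m) (f : 'rV[R]_m -> 'rV[R]_n) : Prop :=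
  forall vs : seq 'rV[R]_m, forall x, U x ->
    (forall v, derivable (iter_dir vs f) x v) /\ {for x, continuous (iter_dir vs f)}.

Definition tangent (m : nat) (M : set 'rV[R]_m) (p : 'rV[R]_m) : set 'rV[R]_m :=
  [set v | exists g : R -> 'rV[R]_m,
     (forall s, M (g s)) /\ g 0 = p /\ derivable g 0 1 /\ derive g 0 1 = v].

Definition smooth_map_on (m n : nat) (M : set 'rV[R]_m) (F : 'rV[R]_m -> 'rV[R]_n) : Prop :=
  exists U : set 'rV[R]_m, open U /\ M `<=` U /\ smooth_on U F.

Definition conformally_equivalent (m n : nat) (M : set 'rV[R]_m) (N : set 'rV[R]_n) : Prop :=
  exists (F : 'rV[R]_m -> 'rV[R]_n) (G : 'rV[R]_n -> 'rV[R]_m) (lam : 'rV[R]_m -> R),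
    smooth_map_on M F /\ smooth_map_on N G /\
    (forall x, M x -> N (F x) /\ G (F x) = x) /\
    (forall y, N y -> M (G y) /\ F (G y) = y) /\
    (forall p, M p -> 0 < lam p /\
       forall u v, tangent M p u -> tangent M p v ->
         dotv (derive F p u) (derive F p v) = lam p * dotv u v).

Definition vec3 (x y z : R) : 'rV[R]_3 := \row_(i < 3) nth 0 [:: x; y; z] i.
Definition vec4 (a b c d : R) : 'rV[R]_4 := \row_(i < 4) nth 0 [:: a; b; c; d] i.

Definition std_torus (R0 r0 : R) : set 'rV[R]_3 :=
  [set X | exists th ph : R,
     X = vec3 ((R0 + r0 * cos ph) * cos th) ((R0 + r0 * cos ph) * sin th) (r0 * sin ph)].

(* Quaternions a + b i + c j + d k as vectors (a,b,c,d) in R^4. *)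
Definition qa (q : 'rV[R]_4) := q ord0 (inord 0).
Definition qb (q : 'rV[R]_4) := q ord0 (inord 1).
Definition qc (q : 'rV[R]_4) := q ord0 (inord 2).
Definition qd (q : 'rV[R]_4) := q ord0 (inord 3).

Definition qmul (p q : 'rV[R]_4) : 'rV[R]_4 :=
  vec4 (qa p * qa q - qb p * qb q - qc p * qc q - qd p * qd q)
       (qa p * qb q + qb p * qa q + qc p * qd q - qd p * qc q)
       (qa p * qc q - qb p * qd q + qc p * qa q + qd p * qb q)
       (qa p * qd q + qb p * qc q - qc p * qb q + qd p * qa q).

Definition qtilde (q : 'rV[R]_4) : 'rV[R]_4 := vec4 (qa q) (- qb q) (qc q) (qd q).

Definition S3 : set 'rV[R]_4 := [set q | dotv q q = 1].

Definition hopf (q : 'rV[R]_4) : 'rV[R]_4 := qmul (qtilde q) q.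

(* Hopf torus over a closed curve p : R -> S^2 (S^2 inside span(1,j,k)). *)
Definition hopf_torus (p : R -> 'rV[R]_4) : set 'rV[R]_4 :=
  [set q | S3 q /\ exists s, hopf q = p s].

Definition circle_pt (t : R) (s : R) : 'rV[R]_4 :=
  vec4 (2 * t ^+ 2 - 1) 0
       (2 * t * Num.sqrt (1 - t ^+ 2) * cos s)
       (2 * t * Num.sqrt (1 - t ^+ 2) * sin s).

End Defs.

(* Main.v *)
Require Import Defs.
From HB Require Import structures.
From mathcomp Require Import all_boot all_order all_algebra.
From mathcomp Require Import all_classical all_reals all_analysis.
Import Order.TTheory GRing.Theory Num.Theory.
Import numFieldNormedType.Exports.
Local Open Scope classical_set_scope.
Local Open Scope ring_scope.
Set Implicit Arguments. Unset Strict Implicit. Unset Printing Implicit Defensive.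

From mathcomp Require Import ring lra.
Section Ex.
Variable R : realType.
Variable m : nat.

Inductive ex := ECst of R | EVar of 'I_m | EAdd of ex & ex | EMul of ex & ex | EInv of ex.

Fixpoint ev (e : ex) (x : 'rV[R]_m) : R :=
  match e with
  | ECst c => c
  | EVar i => x ord0 i
  | EAdd a b => ev a x + ev b x
  | EMul a b => ev a x * ev b x
  | EInv a => (ev a x)^-1
  end.

Fixpoint dex (v : 'rV[R]_m) (e : ex) : ex :=
  match e with
  | ECst _ => ECst 0
  | EVar i => ECst (v ord0 i)
  | EAdd a b => EAdd (dex v a) (dex v b)
  | EMul a b => EAdd (EMul (dex v a) b) (EMul a (dex v b))
  | EInv a => EMul (EMul (ECst (-1)) (dex v a)) (EMul (EInv a) (EInv a))
  end.

Fixpoint good (U : set 'rV[R]_m) (e : ex) : Prop :=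
  match e with
  | ECst _ | EVar _ => True
  | EAdd a b | EMul a b => good U a /\ good U b
  | EInv a => good U a /\ forall x, U x -> ev a x != 0
  end.

Lemma good_dex U v e : good U e -> good U (dex v e).
Proof.
elim: e => //= [a iha b ihb|a iha b ihb|a iha] .
- by case=> /iha ? /ihb.
- by case=> ga gb; split; split => //; [apply: iha | apply: ihb].
- by case=> ga hx; split; split => //; apply: iha.
Qed.

Lemma is_derive_var (i : 'I_m) (x v : 'rV[R]_m) :
  is_derive x v (fun y : 'rV[R]_m => y ord0 i) (v ord0 i).
Proof.
have H : (fun h : R => h^-1 *: (((fun y : 'rV[R]_m => y ord0 i) \o shift x) (h *: v)
            - x ord0 i)) @ 0^' --> v ord0 i.
  apply: cvg_trans (cvg_cst (v ord0 i)).
  apply: (@near_eq_cvg _ _ _ (dnbhs_filter _)); near=> h => /=.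
  rewrite !mxE addrK /GRing.scale /= mulrA mulVf ?mul1r //.
  by near: h; exists 1 => //= y _; rewrite eq_sym.
  exact: dnbhs_filter.
apply: DeriveDef; first by apply/cvg_ex; exists (v ord0 i).
exact: cvg_lim H.
Unshelve. all: by end_near. Qed.

Lemma is_derive_fe (f g : 'rV[R]_m -> R) x v df dg :
  f = g -> df = dg -> is_derive x v f df -> is_derive x v g dg.
Proof. by move=> -> ->. Qed.

Lemma ev_derive U e x v : good U e -> U x -> is_derive x v (ev e) (ev (dex v e) x).
Proof.
move=> + Ux; elim: e => [c|i|a iha b ihb|a iha b ihb|a iha] /=.
- by move=> _; apply: is_derive_cst.
- by move=> _; apply: is_derive_var.
- case=> /iha ha /ihb hb.
  apply: is_derive_fe (is_deriveD ha hb) => //.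
- case=> /iha ha /ihb hb.
  apply: is_derive_fe (is_deriveM ha hb) => //.
  by rewrite /GRing.scale /= addrC mulrC [ev a x * _]mulrC.
- case=> /iha ha hx.
  have nz := hx x Ux.
  apply: DeriveDef.
    by apply: derivableV => //; case: ha.
  rewrite deriveV //.
  rewrite (@derive_val _ _ _ _ _ _ _ ha) /GRing.scale /=.
  by rewrite mulN1r !mulNr mulrC expr2 invfM.
Qed.

Lemma ev_cont U e x : good U e -> U x -> {for x, continuous (ev e)}.
Proof.
move=> + Ux; elim: e => /= [c|i|a iha b ihb|a iha b ihb|a iha].
- by move=> _; exact: cst_continuous.
- move=> _; exact: coord_continuous.
- case=> /iha ha /ihb hb. apply: (@cvgD _ _ _ _ (nbhs_filter x)) => //.
- case=> /iha ha /ihb hb. apply: (@cvgM _ _ _ (nbhs_filter x)) => //.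
- case=> /iha ha hx. apply: (@cvgV _ _ _ (nbhs_filter x)) => //. exact: hx.
Qed.


Lemma is_derive_scl n (k : 'rV[R]_m -> R) (w : 'rV[R]_n) x v dk :
  is_derive x v k dk -> is_derive x v (fun y => k y *: w) (dk *: w).
Proof.
case=> dkx <-.
have H : (fun h : R => h^-1 *: (((fun y => k y *: w) \o shift x) (h *: v) - k x *: w))
   @ 0^' --> 'D_v k x *: w.
  have -> : (fun h : R => h^-1 *: (((fun y => k y *: w) \o shift x) (h *: v) - k x *: w))
     = (fun h : R => (h^-1 *: ((k \o shift x) (h *: v) - k x)) *: w).
    by apply/funext => h /=; rewrite -scalerBl scalerA.
  exact: (@cvgZr_tmp _ _ _ _ (dnbhs_filter _) _ _ _ dkx).
apply: DeriveDef; first by apply/cvg_ex; eexists; exact: H.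
exact: cvg_lim H.
Qed.

Definition evv n (E : 'I_n -> ex) : 'rV[R]_m -> 'rV[R]_n := fun x => \row_j ev (E j) x.

Lemma evvE n (E : 'I_n -> ex) :
  evv E = \sum_(j < n) (fun y => ev (E j) y *: (delta_mx 0 j : 'rV[R]_n)).
Proof.
rewrite fct_sumE; apply/funext => y.
rewrite {1}[evv E y]row_sum_delta; apply: eq_bigr => j _.
by rewrite /evv mxE.
Qed.

Lemma evv_derive U n (E : 'I_n -> ex) x v : (forall j, good U (E j)) -> U x ->
  is_derive x v (evv E) (evv (fun j => dex v (E j)) x).
Proof.
move=> gE Ux.
have -> : evv (fun j => dex v (E j)) x =
   \sum_(j < n) ev (dex v (E j)) x *: (delta_mx 0 j : 'rV[R]_n).
  by rewrite evvE fct_sumE.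
rewrite evvE; apply: is_derive_sum => j.
by apply: is_derive_scl; apply: ev_derive (gE j) Ux.
Qed.

Lemma evv_cont U n (E : 'I_n -> ex) x : (forall j, good U (E j)) -> U x ->
  {for x, continuous (evv E)}.
Proof.
move=> gE Ux; rewrite evvE.
elim/big_ind: _.
- exact: cst_continuous.
- by move=> f g hf hg; apply: (@cvgD _ _ _ _ (nbhs_filter x)).
- move=> j _.
  exact: (@cvgZr_tmp _ _ _ _ (nbhs_filter x) _ _ _ (ev_cont (gE j) Ux)).
Qed.

Definition dexs (vs : seq 'rV[R]_m) (e : ex) := foldr (fun v e => dex v e) e vs.

Lemma good_dexs U vs e : good U e -> good U (dexs vs e).
Proof. by elim: vs => //= v vs ih /ih; apply: good_dex. Qed.

Lemma evv_smooth U n (E : 'I_n -> ex) : open U -> (forall j, good U (E j)) ->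
  smooth_on U (evv E).
Proof.
move=> oU gE.
have key : forall vs x, U x -> iter_dir vs (evv E) x = evv (fun j => dexs vs (E j)) x.
  elim=> [//|v vs ih] x Ux /=.
  have nU : \forall y \near x, U y by apply: open_nbhs_nbhs.
  rewrite (@near_eq_derive _ _ _ _ (evv (fun j => dexs vs (E j)))); last first.
    by apply: filterS nU => y Uy; apply: ih.
  have gs : forall j, good U (dexs vs (E j)) by move=> j; apply: good_dexs.
  by rewrite (@derive_val _ _ _ _ _ _ _ (evv_derive v gs Ux)).
move=> vs x Ux.
have gs : forall j, good U (dexs vs (E j)) by move=> j; apply: good_dexs.
have nU : \forall y \near x, evv (fun j => dexs vs (E j)) y = iter_dir vs (evv E) y.
  apply: filterS (open_nbhs_nbhs (conj oU Ux)) => y Uy; by rewrite key.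
split.
- move=> w; apply: near_eq_derivable nU _.
  by case: (evv_derive w gs Ux).
- have := evv_cont gs Ux.
  move=> h.
  change (iter_dir vs (evv E) @ x --> iter_dir vs (evv E) x).
  rewrite (key _ _ Ux).
  apply: cvg_trans h.
  exact: (@near_eq_cvg _ _ _ (nbhs_filter x)).
Qed.

End Ex.
Arguments ECst {R m}. Arguments EVar {R m}. Arguments EAdd {R m}.
Arguments EMul {R m}. Arguments EInv {R m}.
Section H.
Variable R : realType.

Lemma v4a (a b c d : R) : qa (vec4 a b c d) = a.
Proof. by rewrite /qa /vec4 mxE inordK. Qed.
Lemma v4b (a b c d : R) : qb (vec4 a b c d) = b.
Proof. by rewrite /qb /vec4 mxE inordK. Qed.
Lemma v4c (a b c d : R) : qc (vec4 a b c d) = c.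
Proof. by rewrite /qc /vec4 mxE inordK. Qed.
Lemma v4d (a b c d : R) : qd (vec4 a b c d) = d.
Proof. by rewrite /qd /vec4 mxE inordK. Qed.

Lemma v3i (a b c : R) (i : nat) (hi : (i < 3)%N) :
  vec3 a b c ord0 (inord i) = nth 0 [:: a; b; c] i.
Proof. by rewrite /vec3 mxE inordK. Qed.

Lemma ord4E (j : 'I_4) : j = inord 0 \/ j = inord 1 \/ j = inord 2 \/ j = inord 3.
Proof.
case: j => [[|[|[|[|j]]]] hj].
- by left; apply/val_inj; rewrite /= inordK.
- by right; left; apply/val_inj; rewrite /= inordK.
- by right; right; left; apply/val_inj; rewrite /= inordK.
- by right; right; right; apply/val_inj; rewrite /= inordK.
- by [].
Qed.

Lemma ord3E (j : 'I_3) : j = inord 0 \/ j = inord 1 \/ j = inord 2.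
Proof.
case: j => [[|[|[|j]]] hj].
- by left; apply/val_inj; rewrite /= inordK.
- by right; left; apply/val_inj; rewrite /= inordK.
- by right; right; apply/val_inj; rewrite /= inordK.
- by [].
Qed.

Lemma rv4P (p q : 'rV[R]_4) : qa p = qa q -> qb p = qb q -> qc p = qc q ->
  qd p = qd q -> p = q.
Proof.
move=> ha hb hc hd; apply/rowP => j.
have -> : (0 : 'I_1) = ord0 by apply/val_inj.
by case: (ord4E j) => [->|[->|[->|->]]].
Qed.

Lemma rv3P (p q : 'rV[R]_3) : p ord0 (inord 0) = q ord0 (inord 0) ->
  p ord0 (inord 1) = q ord0 (inord 1) -> p ord0 (inord 2) = q ord0 (inord 2) -> p = q.
Proof.
move=> ha hb hc; apply/rowP => j.
have -> : (0 : 'I_1) = ord0 by apply/val_inj.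
by case: (ord3E j) => [->|[->|->]].
Qed.

Lemma sum4 (f : 'I_4 -> R) :
  \sum_(i < 4) f i = f (inord 0) + f (inord 1) + f (inord 2) + f (inord 3).
Proof.
rewrite !big_ord_recl big_ord0 addr0 !addrA.
by congr (_ + _ + _ + _); congr f; apply/val_inj; rewrite /= inordK.
Qed.

Lemma sum3 (f : 'I_3 -> R) :
  \sum_(i < 3) f i = f (inord 0) + f (inord 1) + f (inord 2).
Proof.
rewrite !big_ord_recl big_ord0 addr0 !addrA.
by congr (_ + _ + _); congr f; apply/val_inj; rewrite /= inordK.
Qed.

Lemma dotv4 (p q : 'rV[R]_4) :
  dotv p q = qa p * qa q + qb p * qb q + qc p * qc q + qd p * qd q.
Proof. by rewrite /dotv sum4. Qed.

Lemma angle (x y : R) : x ^+ 2 + y ^+ 2 = 1 -> exists th, cos th = x /\ sin th = y.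
Proof.
move=> h.
have hx : -1 <= x <= 1 by apply/andP; split; nra.
have hs : Num.sqrt (1 - x ^+ 2) = `|y|.
  by rewrite -sqrtr_sqr; congr Num.sqrt; lra.
have cK : cos (acos x) = x by apply: acosK; rewrite in_itv.
have sA : sin (acos x) = `|y| by rewrite sin_acos.
case: (lerP 0 y) => hy.
- by exists (acos x); rewrite cK sA ger0_norm.
- exists (- acos x); rewrite cosN sinN cK sA ltr0_norm //; lra.
Qed.

End H.
Section Main.
Variable R : realType.
Variables R0 r0 : R.
Hypothesis hr0 : 0 < r0.
Hypothesis hrR : r0 < R0.

Definition ttr := r0 / R0.
Definition bb := Num.sqrt (1 - ttr ^+ 2).
Definition cc := R0 * bb.
Definition KK := 2 / cc.
Definition kk := (cc ^+ 2)^-1.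

Lemma R0_gt0 : 0 < R0. Proof. exact: lt_trans hr0 hrR. Qed.
Lemma tt_gt0 : 0 < ttr. Proof. by rewrite /ttr divr_gt0 // R0_gt0. Qed.
Lemma tt_lt1 : ttr < 1. Proof. by rewrite /ttr ltr_pdivrMr ?R0_gt0 // mul1r. Qed.
Lemma omt_gt0 : 0 < 1 - ttr ^+ 2.
Proof. have h1 := tt_gt0; have h2 := tt_lt1; nra. Qed.
Lemma bb_gt0 : 0 < bb. Proof. by rewrite /bb sqrtr_gt0 omt_gt0. Qed.
Lemma bb2 : bb ^+ 2 = 1 - ttr ^+ 2. Proof. by rewrite /bb sqr_sqrtr // ltW // omt_gt0. Qed.
Lemma cc_gt0 : 0 < cc. Proof. by rewrite /cc mulr_gt0 ?R0_gt0 ?bb_gt0. Qed.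
Lemma kk_gt0 : 0 < kk. Proof. by rewrite /kk invr_gt0 exprn_gt0 // cc_gt0. Qed.

Definition X0 : ex R 3 := @EVar R 3 (inord 0).
Definition X1 : ex R 3 := @EVar R 3 (inord 1).
Definition X2 : ex R 3 := @EVar R 3 (inord 2).
Definition SE : ex R 3 :=
  EAdd (ECst 1) (EMul (ECst kk) (EAdd (EMul X0 X0) (EAdd (EMul X1 X1) (EMul X2 X2)))).
Definition FE (j : 'I_4) : ex R 3 :=
  match nat_of_ord j with
  | 0 => EAdd (ECst 1) (EMul (ECst (-2)) (EInv SE))
  | 1 => EMul (ECst KK) (EMul X2 (EInv SE))
  | 2 => EMul (ECst KK) (EMul X0 (EInv SE))
  | _ => EMul (ECst KK) (EMul X1 (EInv SE))
  end.
Definition FF := evv FE.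

Definition Sf (X : 'rV[R]_3) := ev SE X.
Lemma Sf_gt0 X : 0 < Sf X.
Proof.
rewrite /Sf /=; have := kk_gt0.
set a := X ord0 _; set b := X ord0 _; set c := X ord0 _.
move=> hk; have : 0 <= a * a + (b * b + c * c) by nra.
nra.
Qed.
Lemma Sf_neq0 X : Sf X != 0. Proof. by rewrite gt_eqF // Sf_gt0. Qed.

Definition lam (p : 'rV[R]_3) := 4 * kk * (Sf p)^-1 ^+ 2.

Lemma goodF j : good setT (FE j).
Proof.
have h : forall x, setT x -> ev SE x != 0 by move=> x _; exact: Sf_neq0.
by case: (ord4E j) => [->|[->|[->|->]]]; rewrite /FE inordK //=.
Qed.

Lemma conf p u v :
  dotv (derive FF p u) (derive FF p v) = lam p * dotv u v.
Proof.
rewrite (@derive_val _ _ _ _ _ _ _ (evv_derive u goodF (I : setT p))).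
rewrite (@derive_val _ _ _ _ _ _ _ (evv_derive v goodF (I : setT p))).
rewrite dotv4 /dotv sum3 /qa /qb /qc /qd /evv !mxE /FE !inordK //=.
have := Sf_neq0 p; rewrite /lam /Sf /= => hS.
rewrite /KK /kk.
have hc : cc != 0 by rewrite gt_eqF // cc_gt0.
field.
rewrite hc /=; have hc2 := cc_gt0; apply/negP => /eqP h; nra.
Qed.


Definition Q0 : ex R 4 := @EVar R 4 (inord 0).
Definition Q1 : ex R 4 := @EVar R 4 (inord 1).
Definition Q2 : ex R 4 := @EVar R 4 (inord 2).
Definition Q3 : ex R 4 := @EVar R 4 (inord 3).
Definition DE : ex R 4 := EInv (EAdd (ECst 1) (EMul (ECst (-1)) Q0)).
Definition GE (j : 'I_3) : ex R 4 :=
  match nat_of_ord j with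
  | 0 => EMul (ECst cc) (EMul Q2 DE)
  | 1 => EMul (ECst cc) (EMul Q3 DE)
  | _ => EMul (ECst cc) (EMul Q1 DE)
  end.
Definition GG := evv GE.

Lemma FFa X : qa (FF X) = 1 + -2 * (Sf X)^-1.
Proof. by rewrite /qa /FF /evv mxE /FE inordK. Qed.
Lemma FFb X : qb (FF X) = KK * (X ord0 (inord 2) * (Sf X)^-1).
Proof. by rewrite /qb /FF /evv mxE /FE inordK. Qed.
Lemma FFc X : qc (FF X) = KK * (X ord0 (inord 0) * (Sf X)^-1).
Proof. by rewrite /qc /FF /evv mxE /FE inordK. Qed.
Lemma FFd X : qd (FF X) = KK * (X ord0 (inord 1) * (Sf X)^-1).
Proof. by rewrite /qd /FF /evv mxE /FE inordK. Qed.

Lemma GG0 q : GG q ord0 (inord 0) = cc * (qc q * (1 + -1 * qa q)^-1).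
Proof. by rewrite /GG /evv mxE /GE inordK. Qed.
Lemma GG1 q : GG q ord0 (inord 1) = cc * (qd q * (1 + -1 * qa q)^-1).
Proof. by rewrite /GG /evv mxE /GE inordK. Qed.
Lemma GG2 q : GG q ord0 (inord 2) = cc * (qb q * (1 + -1 * qa q)^-1).
Proof. by rewrite /GG /evv mxE /GE inordK. Qed.

Lemma cc_neq0 : cc != 0. Proof. by rewrite gt_eqF // cc_gt0. Qed.

Lemma GF X : GG (FF X) = X.
Proof.
have hS := Sf_neq0 X; have hc := cc_neq0.
have h2 : 1 + -1 * (1 + -2 * (Sf X)^-1) = 2 / Sf X by field.
apply: rv3P; rewrite ?GG0 ?GG1 ?GG2 FFa ?FFb ?FFc ?FFd h2 /KK; field; by rewrite hS hc.
Qed.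

Lemma SfG q : dotv q q = 1 -> qa q != 1 -> Sf (GG q) = 2 / (1 - qa q).
Proof.
rewrite dotv4 => h1 h2.
have h3 : 1 - qa q != 0 by rewrite subr_eq0 eq_sym.
have h4 : 1 + -1 * qa q = 1 - qa q by rewrite mulN1r.
rewrite /Sf /= -/(GG q ord0 (inord 0)) -/(GG q ord0 (inord 1)) -/(GG q ord0 (inord 2)).
rewrite GG0 GG1 GG2 h4 /kk.
have hc := cc_neq0.
have e : qc q * qc q + (qd q * qd q + qb q * qb q) = 1 - qa q * qa q.
  by rewrite -h1; ring.
transitivity (1 + (qc q * qc q + (qd q * qd q + qb q * qb q)) / (1 - qa q) ^+ 2).
  by field; rewrite hc h3.
rewrite e; field; by rewrite h3.
Qed.

Lemma FG q : dotv q q = 1 -> qa q != 1 -> FF (GG q) = q.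
Proof.
move=> h1 h2; have hS := SfG h1 h2.
have h3 : 1 - qa q != 0 by rewrite subr_eq0 eq_sym.
have h4 : 1 + -1 * qa q = 1 - qa q by rewrite mulN1r.
have hc := cc_neq0.
apply: rv4P; rewrite ?FFa ?FFb ?FFc ?FFd ?GG0 ?GG1 ?GG2 ?hS ?h4 /KK; field; by rewrite ?hc ?h3.
Qed.


Lemma cc2 : cc ^+ 2 = R0 ^+ 2 - r0 ^+ 2.
Proof.
rewrite /cc exprMn bb2 /ttr.
have h : R0 != 0 by rewrite gt_eqF // R0_gt0.
by field.
Qed.

Lemma T0 X : dotv (FF X) (FF X) = 1.
Proof.
have hS := Sf_neq0 X; have hc := cc_neq0.
rewrite dotv4 FFa FFb FFc FFd.
rewrite /Sf /= /KK /kk.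
field; rewrite hc /=; have hc2 := cc_gt0; apply/negP => /eqP h; nra.
Qed.

Definition torus_pt th ph : 'rV[R]_3 :=
  vec3 ((R0 + r0 * cos ph) * cos th) ((R0 + r0 * cos ph) * sin th) (r0 * sin ph).

Lemma RC_gt0 ph : 0 < R0 + r0 * cos ph.
Proof. have := cos_geN1 ph; have := hr0; have := hrR; nra. Qed.

Lemma Rr_neq0 : R0 ^+ 2 - r0 ^+ 2 != 0.
Proof. have := hr0; have := hrR; move=> h1 h2; apply/negP => /eqP h; nra. Qed.

Lemma SfT th ph : Sf (torus_pt th ph) = 2 * R0 * (R0 + r0 * cos ph) / (R0 ^+ 2 - r0 ^+ 2).
Proof.
rewrite /Sf /= /torus_pt !v3i //= /kk cc2.
have e1 := cos2Dsin2 th; have e2 := cos2Dsin2 ph.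
have eN : (R0 + r0 * cos ph) * cos th * ((R0 + r0 * cos ph) * cos th) +
   ((R0 + r0 * cos ph) * sin th * ((R0 + r0 * cos ph) * sin th) +
    r0 * sin ph * (r0 * sin ph)) = R0 ^+ 2 + 2 * R0 * r0 * cos ph + r0 ^+ 2.
  transitivity ((R0 + r0 * cos ph) ^+ 2 * (cos th ^+ 2 + sin th ^+ 2) + r0 ^+ 2 * sin ph ^+ 2).
    by ring.
  have e3 : sin ph ^+ 2 = 1 - cos ph ^+ 2 by lra.
  by rewrite e1 e3; ring.
rewrite eN; have := Rr_neq0 => h; by field.
Qed.

Lemma T1 th ph :
  qa (FF (torus_pt th ph)) ^+ 2 + qb (FF (torus_pt th ph)) ^+ 2 = ttr ^+ 2.
Proof.
rewrite FFa FFb.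
have hS := Sf_neq0 (torus_pt th ph); have hc := cc_neq0.
set S := Sf _.
transitivity ((1 + -2 * S^-1) ^+ 2 + 4 * r0 ^+ 2 * sin ph ^+ 2 / (cc ^+ 2 * S ^+ 2)).
  rewrite /S /torus_pt !v3i //= /KK; by field; rewrite hc hS.
have e2 := cos2Dsin2 ph.
have e3 : sin ph ^+ 2 = 1 - cos ph ^+ 2 by lra.
rewrite /S SfT cc2 e3 /ttr.
have h1 := Rr_neq0; have h2 := RC_gt0 ph; have h3 := R0_gt0.
have h2' : R0 + r0 * cos ph != 0 by rewrite gt_eqF.
have h3' : R0 != 0 by rewrite gt_eqF.
field.
by rewrite h1 h2' h3'.
Qed.

Lemma hopf_circle q s : qa q ^+ 2 + qb q ^+ 2 = ttr ^+ 2 ->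
  qc q ^+ 2 + qd q ^+ 2 = 1 - ttr ^+ 2 ->
  cos s = (qa q * qc q + qb q * qd q) / (ttr * bb) ->
  sin s = (qa q * qd q - qb q * qc q) / (ttr * bb) ->
  hopf q = circle_pt ttr s.
Proof.
move=> h1 h2 hc hs.
have ht : ttr != 0 by rewrite gt_eqF // tt_gt0.
have hb : bb != 0 by rewrite gt_eqF // bb_gt0.
apply: rv4P; rewrite /hopf /qmul /qtilde /circle_pt !v4a !v4b !v4c !v4d -/bb.
- move: h1 h2; rewrite !expr2 => h1 h2; lra.
- ring.
- rewrite hc; field; by rewrite ht hb.
- rewrite hs; field; by rewrite ht hb.
Qed.

Lemma circle_hopf q s : dotv q q = 1 -> hopf q = circle_pt ttr s ->
  qa q ^+ 2 + qb q ^+ 2 = ttr ^+ 2 /\ qc q ^+ 2 + qd q ^+ 2 = 1 - ttr ^+ 2.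
Proof.
rewrite dotv4 => h1 /(congr1 (@qa R)).
rewrite /hopf /qmul /qtilde /circle_pt !v4a !v4b !v4c !v4d !expr2 => h2.
split; lra.
Qed.

Definition UG : set 'rV[R]_4 := (fun q : 'rV[R]_4 => q ord0 (inord 0)) @^-1` [set x : R | x < 1].

Lemma open_UG : open UG.
Proof.
apply: open_comp; last exact: open_lt.
move=> x _; exact: coord_continuous.
Qed.

Lemma goodG j : good UG (GE j).
Proof.
have h : forall x, UG x -> ev (EAdd (ECst 1) (EMul (ECst (-1)) Q0)) x != 0.
  move=> x; rewrite /UG /= => hx; apply/negP => /eqP e; lra.
by case: (ord3E j) => [->|[->|->]]; rewrite /GE inordK //=.
Qed.

End Main.

Theorem corollary3 (R : realType) (R0 r0 : R) :
  0 < r0 -> r0 < R0 -> Num.sqrt 2 < R0 / r0 ->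
  conformally_equivalent (std_torus R0 r0) (hopf_torus (circle_pt (r0 / R0))).
Proof.
move=> hr0 hrR _.
exists (FF R0 r0), (GG R0 r0), (lam R0 r0).
split; [|split; [|split; [|split]]].
- exists setT; split; first exact: openT.
  split; first by [].
  apply: evv_smooth; first exact: openT.
  exact: goodF.
- exists (@UG R); split; first exact: open_UG.
  split; last by apply: evv_smooth; [exact: open_UG | exact: goodG].
  move=> q [h1 [s hs]].
  have [t1 _] := circle_hopf h1 hs.
  rewrite /UG /=; have := tt_lt1 hr0 hrR; have := tt_gt0 hr0 hrR.
  move: t1; rewrite /qa !expr2 => t1 ha hb; nra.
- move=> X [th [ph ->]].
  rewrite -/(torus_pt R0 r0 th ph).
  split; last exact: GF.
  set q := FF R0 r0 _.
  have h0 := T0 hr0 hrR (torus_pt R0 r0 th ph); rewrite -/q in h0.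
  have t1 := T1 hr0 hrR th ph; rewrite -/q in t1.
  have t2 : qc q ^+ 2 + qd q ^+ 2 = 1 - ttr R0 r0 ^+ 2.
    move: h0 t1; rewrite dotv4 !expr2 => h0 t1; lra.
  split; first exact: h0.
  have ht : ttr R0 r0 != 0 by rewrite gt_eqF // tt_gt0.
  have hb : bb R0 r0 != 0 by rewrite gt_eqF // bb_gt0.
  have [s [hc hs]] : exists s, cos s = (qa q * qc q + qb q * qd q) / (ttr R0 r0 * bb R0 r0) /\ sin s = (qa q * qd q - qb q * qc q) / (ttr R0 r0 * bb R0 r0).
    apply: angle.
    transitivity ((qa q ^+ 2 + qb q ^+ 2) * (qc q ^+ 2 + qd q ^+ 2) / (ttr R0 r0 * bb R0 r0) ^+ 2).
      by field; rewrite ht hb.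
    rewrite t1 t2 -bb2 //; field; by rewrite ht hb.
  exists s; exact: hopf_circle.
- move=> q [h1 [s hs]].
  have [t1 t2] := circle_hopf h1 hs.
  have hlt : qa q < 1.
    have := tt_lt1 hr0 hrR; have := tt_gt0 hr0 hrR.
    move: t1; rewrite !expr2 => t1 ha hb; nra.
  have hq1 : qa q != 1 by rewrite lt_eqF.
  split; last exact: FG.
  have ht : ttr R0 r0 != 0 by rewrite gt_eqF // tt_gt0.
  have hb : bb R0 r0 != 0 by rewrite gt_eqF // bb_gt0.
  have hom : 1 - ttr R0 r0 ^+ 2 != 0 by rewrite gt_eqF // omt_gt0.
  have h1q : 1 - qa q != 0 by rewrite subr_eq0 eq_sym.
  have [th [c1 s1]] : exists th, cos th = qc q * bb R0 r0 / (1 - ttr R0 r0 ^+ 2) /\ sin th = qd q * bb R0 r0 / (1 - ttr R0 r0 ^+ 2).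
    apply: angle.
    transitivity ((qc q ^+ 2 + qd q ^+ 2) * bb R0 r0 ^+ 2 / (1 - ttr R0 r0 ^+ 2) ^+ 2).
      by field.
    rewrite t2 bb2 //; field; by rewrite hom.
  have [ph [c2 s2]] : exists ph, cos ph = (qa q - ttr R0 r0 ^+ 2) / (ttr R0 r0 * (1 - qa q)) /\ sin ph = bb R0 r0 * qb q / (ttr R0 r0 * (1 - qa q)).
    apply: angle.
    transitivity (((qa q - ttr R0 r0 ^+ 2) ^+ 2 + bb R0 r0 ^+ 2 * qb q ^+ 2) / (ttr R0 r0 * (1 - qa q)) ^+ 2).
      by field; rewrite ht h1q.
    have e : qb q ^+ 2 = ttr R0 r0 ^+ 2 - qa q ^+ 2 by lra.
    rewrite bb2 // e; field; by rewrite ht h1q.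
  exists th, ph.
  have hR : R0 != 0 by rewrite gt_eqF // (R0_gt0 hr0 hrR).
  have hr : r0 != 0 by rewrite gt_eqF.
  have hRr := Rr_neq0 hr0 hrR.
  by apply: rv3P; rewrite ?GG0 ?GG1 ?GG2 !v3i //= ?c1 ?s1 ?c2 ?s2 mulN1r /cc /ttr;
    field; rewrite ?hR ?hRr ?h1q ?hr.
  
- move=> p _; split.
    rewrite /lam; apply: mulr_gt0; first by apply: mulr_gt0 => //; exact: kk_gt0.
    by rewrite exprn_gt0 // invr_gt0 Sf_gt0.
  move=> u v _ _; exact: conf.
Qed.
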